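(* Let $T_4=\{(x,y)\in\mathbb{N}^2 : x+y\le 5\}$. Then $\mathrm{gon}(R(T_4))=6$.
   Context: $\mathbb{N}=\{1,2,3,\dots\}$. For a Ferrers diagram $F\subset\mathbb{N}^2$, the Ferrers rook graph $R(F)$ is the simple graph with vertex set $F$ in which distinct $(x,y),(x',y')$ are adjacent iff $x=x'$ or $y=y'$. Divisors on a graph: functions $D:V\to\mathbb{Z}$, degree $\sum_v D(v)$; firing a vertex $v$ means $v$ loses $\deg(v)$ chips and each neighbor gains one; divisors are equivalent if related by a sequence of firings; $\vert D\vert$ is the set of effective (nonnegative) divisors equivalent to $D$; $D$ has positive rank if for every vertex $v$ some $D'\in\vert D\vert$ has $D'(v)>0$. The gonality $\mathrm{gon}(G)$ is the minimum degree of a divisor on $G$ with positive rank. *)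

(* Defs.v *)
From HB Require Import structures.
From mathcomp Require Import all_boot all_order all_algebra.
From Stdlib Require Import Relation_Operators.
Set Implicit Arguments. Unset Strict Implicit. Unset Printing Implicit Defensive.
Import Order.TTheory GRing.Theory Num.Theory.
Local Open Scope ring_scope.

(* A simple graph is given by a finite vertex type V and an adjacency relation
   adj (assumed symmetric and irreflexive where it matters). *)

Definition divisor (V : finType) := {ffun V -> int}.

Definition vdeg (V : finType) (adj : rel V) (v : V) : nat := #|[set w | adj v w]|.

Definition div_deg (V : finType) (D : divisor V) : int := \sum_(v : V) D v.

Definition fire (V : finType) (adj : rel V) (v : V) (D : divisor V) : divisor V :=
  [ffun w => if w == v then D w - (vdeg adj v)%:Z
             else if adj v w then D w + 1 else D w].

Definition fire_step (V : finType) (adj : rel V) (D D' : divisor V) : Prop :=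
  exists v, D' = fire adj v D.

Definition div_equiv (V : finType) (adj : rel V) (D D' : divisor V) : Prop :=
  clos_refl_trans (divisor V) (@fire_step V adj) D D'.

Definition effective (V : finType) (D : divisor V) : bool := [forall v, 0 <= D v].

Definition pos_rank (V : finType) (adj : rel V) (D : divisor V) : Prop :=
  forall v : V, exists D' : divisor V,
    div_equiv adj D D' /\ effective D' /\ 0 < D' v.

Definition is_gonality (V : finType) (adj : rel V) (k : int) : Prop :=
  (exists D : divisor V, pos_rank adj D /\ div_deg D = k) /\
  (forall D : divisor V, pos_rank adj D -> k <= div_deg D).

(* The staircase T_4 = {(x,y) in N^2 : x + y <= 5}, N = {1,2,...} *)
Definition inT4 (p : 'I_6 * 'I_6) : bool :=
  [&& (1 <= p.1)%N, (1 <= p.2)%N & (p.1 + p.2 <= 5)%N].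

Definition T4 : finType := {p : 'I_6 * 'I_6 | inT4 p}.

Definition rook_adj (V : finType) (pos : V -> nat * nat) : rel V :=
  fun u v => (u != v) && (((pos u).1 == (pos v).1) || ((pos u).2 == (pos v).2)).

Definition T4_pos (u : T4) : nat * nat := (nat_of_ord (val u).1, nat_of_ord (val u).2).

Definition RT4_adj : rel T4 := rook_adj T4_pos.

(* Main.v *)
Require Import Defs.
From mathcomp Require Import all_boot all_order all_algebra.
From mathcomp Require Import zify.
From Stdlib Require Import Relation_Operators.
Set Implicit Arguments. Unset Strict Implicit. Unset Printing Implicit Defensive.
Import Order.TTheory GRing.Theory Num.Theory.
Local Open Scope ring_scope.

Section Gen.
Variable V : finType.
Variable adj : rel V.
Hypothesis adj_sym : forall u w, adj u w = adj w u.
Hypothesis adj_irr : forall u, adj u u = false.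

Definition lap (f : V -> int) (u : V) : int := \sum_(w | adj u w) (f u - f w).

Lemma sum_ind (P : pred V) v : \sum_(w | P w) ((w == v)%:Z) = (P v)%:Z.
Proof.
rewrite big_mkcond (bigD1 v) //= big1 ?addr0 => [|w /negPf ->]; last by case: (P w).
by case: (P v); rewrite ?eqxx.
Qed.

Lemma lap_ext f g u : (forall w, f w = g w) -> lap f u = lap g u.
Proof. by move=> H; apply: eq_bigr => w _; rewrite !H. Qed.

Lemma lapD f g u : lap (fun w => f w + g w) u = lap f u + lap g u.
Proof. rewrite /lap -big_split; apply: eq_bigr => w _ /=; lia. Qed.

Lemma lapB f g u : lap (fun w => f w - g w) u = lap f u - lap g u.
Proof. rewrite /lap -sumrB; apply: eq_bigr => w _ /=; lia. Qed.

Lemma lap0 u : lap (fun _ => 0) u = 0.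
Proof. by rewrite /lap big1 // => w _; rewrite subr0. Qed.

Lemma sum1Z (s : seq V) (P : pred V) : \sum_(x <- s | P x) (1 : int) = (count P s)%:Z.
Proof.
elim: s => [|a s IH]; rewrite ?big_nil ?big_cons //= IH; case: (P a) => /=; lia.
Qed.

Lemma sum_true (P : pred V) : \sum_(w | P w) (Posz true) = #|[set w | P w]|%:Z.
Proof. rewrite sumr_const cardsE. change (Posz true) with (1 : int). by rewrite -natz. Qed.

Lemma fireE v D u : fire adj v D u = D u - lap (fun w => (w == v)%:Z) u.
Proof.
rewrite ffunE /lap sumrB sum_ind.
case: (eqVneq u v) => [->|neq].
  rewrite adj_irr /vdeg sum_true; lia.
rewrite big1 // adj_sym; case: (adj u v) => /=; lia.
Qed.

Lemma equiv_lap D D' : div_equiv adj D D' -> exists f : V -> int, forall u, D' u = D u - lap f u.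
Proof.
rewrite /div_equiv; induction 1 as [D D' [v ->]|D|D1 D2 D3 _ [f1 H1] _ [f2 H2]].
- by exists (fun w => (w == v)%:Z) => u; rewrite fireE.
- by exists (fun _ => 0) => u; rewrite lap0 subr0.
- exists (fun w => f1 w + f2 w) => u; rewrite H2 H1 lapD; lia.
Qed.

Lemma sum_lap f : \sum_u lap f u = 0.
Proof.
set S := \sum_u lap f u.
have HS : S = - S.
  rewrite /S /lap.
  under eq_bigr do rewrite big_mkcond.
  rewrite [LHS]exchange_big /= -sumrN; apply: eq_bigr => u _.
  rewrite -sumrN; apply: eq_bigr => w _.
  by rewrite adj_sym; case: (adj u w); rewrite ?oppr0 ?opprB.
lia.
Qed.

Lemma key (E f : V -> int) v (o : seq V) :
  E v <= 0 -> uniq o -> (forall x, x \in o) -> nth v o 0 = v ->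
  (forall k, (0 < k < size o)%N -> E (nth v o k) < (count (adj (nth v o k)) (take k o))%:Z) ->
  ~ ((forall u, 0 <= E u - lap f u) /\ 0 < E v - lap f v).
Proof.
move=> Ev uo allo o0 Hb [Heff Hv].
pose M := f ([arg max_(x > v) f x]%O).
have Mmax : forall x, f x <= M.
  by rewrite /M; case: arg_maxP => // i _ H x; apply: H.
set k := find (fun x => f x == M) o.
have hasM : has (fun x => f x == M) o by apply/hasP; exists ([arg max_(x > v) f x]%O).
have ko : (k < size o)%N by rewrite -has_find.
have fk : f (nth v o k) = M by apply/eqP; exact: (nth_find v hasM).
have lapge : forall w, f w = M ->
   lap f w = \sum_(x <- take k o | adj w x) (M - f x) + \sum_(x <- drop k o | adj w x) (M - f x).
  move=> w fw; rewrite -big_cat cat_take_drop /lap fw.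
  apply: perm_big; apply: uniq_perm => //; first exact: index_enum_uniq.
  by move=> x; rewrite mem_index_enum allo.
have drop_ge : forall w, 0 <= \sum_(x <- drop k o | adj w x) (M - f x).
  by move=> w; apply: sumr_ge0 => x _; rewrite subr_ge0.
case: (posnP k) => [k0|kpos].
  have vM : f v = M by rewrite -o0 -k0.
  move: Hv; rewrite lapge // => Hv.
  have : 0 <= \sum_(x <- take k o | adj v x) (M - f x).
    by apply: sumr_ge0 => x _; rewrite subr_ge0.
  move: (drop_ge v) => h1 h2; lia.
set w := nth v o k.
have take_gt : (count (adj w) (take k o))%:Z <= \sum_(x <- take k o | adj w x) (M - f x).
  rewrite -sum1Z big_seq_cond [X in _ <= X]big_seq_cond; apply: ler_sum => x /andP [xin _].
  move: xin => /(nthP v) [j]; rewrite size_take => jlt <-.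
  have jk : (j < k)%N by move: jlt; rewrite ko.
  rewrite nth_take //.
  have := before_find v jk; have := Mmax (nth v o j) => h1 /negbT h2.
  have h3 : f (nth v o j) < M by rewrite lt_neqAle h2 h1.
  by rewrite lerBrDl lezD1.
have := Heff w; rewrite lapge // => h.
have := Hb k; rewrite kpos ko => /(_ isT); rewrite -/w.
move: (drop_ge w) => h1 h2; lia.
Qed.

End Gen.

Definition posl : seq (nat * nat) :=
  [:: (1,1);(1,2);(1,3);(1,4);(2,1);(2,2);(2,3);(3,1);(3,2);(4,1)]%N.

Lemma size_posl : size posl = 10%N. Proof. by []. Qed.
Lemma uniq_posl : uniq posl. Proof. by []. Qed.
Lemma posl_ok : all (fun ab : nat * nat => [&& 1 <= ab.1, 1 <= ab.2 & ab.1 + ab.2 <= 5]%N) posl.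
Proof. by []. Qed.

Lemma inT4_11 : inT4 (inord 1, inord 1).
Proof. by rewrite /inT4 /= !inordK. Qed.

Definition u0 : T4 := @exist _ inT4 _ inT4_11.

Definition p (i : nat) : T4 :=
  insubd u0 (inord (nth (0,0)%N posl i).1, inord (nth (0,0)%N posl i).2).

Definition q (u : T4) : nat := index (T4_pos u) posl.

Lemma T4_pos_p i : (i < 10)%N -> T4_pos (p i) = nth (0,0)%N posl i.
Proof.
move=> hi; rewrite /p /T4_pos.
have := all_nthP (0,0)%N posl_ok i; rewrite size_posl => /(_ hi).
case: (nth _ posl i) => a b /= /and3P [ha hb hab].
have a6 : (a < 6)%N by lia.
have b6 : (b < 6)%N by lia.
rewrite insubdK /= ?inordK //.
by rewrite unfold_in /inT4 /= !inordK // ha hb hab.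
Qed.

Lemma T4_pos_in u : T4_pos u \in posl.
Proof.
case: u => [[[x hx] [y hy]] /=]; rewrite /inT4 /T4_pos /= => H.
move: hx hy H.
by case: x => [|[|[|[|[|[|x]]]]]]; case: y => [|[|[|[|[|[|y]]]]]].
Qed.

Lemma q_lt u : (q u < 10)%N.
Proof. by rewrite /q -size_posl index_mem T4_pos_in. Qed.

Lemma pq u : p (q u) = u.
Proof.
apply: val_inj; rewrite /p /q nth_index ?T4_pos_in //.
case: u => [[x y] H] /=.
by rewrite !inord_val insubdK.
Qed.

Lemma qp i : (i < 10)%N -> q (p i) = i.
Proof. by move=> hi; rewrite /q T4_pos_p // index_uniq ?size_posl // uniq_posl. Qed.

Lemma p_inj i j : (i < 10)%N -> (j < 10)%N -> (p i == p j) = (i == j).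
Proof.
move=> hi hj; apply/eqP/eqP => [h|->//].
by rewrite -(qp hi) h qp.
Qed.

Definition cadj (i j : nat) : bool :=
  let a := nth (0,0)%N posl i in let b := nth (0,0)%N posl j in
  (i != j) && ((a.1 == b.1) || (a.2 == b.2)).

Lemma adj_p i j : (i < 10)%N -> (j < 10)%N -> RT4_adj (p i) (p j) = cadj i j.
Proof.
move=> hi hj; rewrite /RT4_adj /rook_adj p_inj // !T4_pos_p //.
Qed.

Lemma RT4_sym u w : RT4_adj u w = RT4_adj w u.
Proof. by rewrite /RT4_adj /rook_adj eq_sym [_.1 == _]eq_sym [_.2 == _]eq_sym. Qed.

Lemma RT4_irr u : RT4_adj u u = false.
Proof. by rewrite /RT4_adj /rook_adj eqxx. Qed.

Lemma sumT4 (P : pred T4) (F : T4 -> int) :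
  \sum_(u | P u) F u = \sum_(j <- iota 0 10 | P (p j)) F (p j).
Proof.
have bij : bijective (fun j : 'I_10 => p j).
  exists (fun u => Ordinal (q_lt u)) => [j|u]; last by rewrite pq.
  by apply: val_inj; rewrite /= qp.
rewrite (reindex (fun j : 'I_10 => p j)); last exact: onW_bij.
by rewrite -(big_mkord (fun j => P (p j)) (fun j => F (p j))).
Qed.

Lemma sumT4' (F : T4 -> int) : \sum_u F u = \sum_(j <- iota 0 10) F (p j).
Proof. exact: (sumT4 xpredT F). Qed.

Definition cclap (g : seq int) (i : nat) : int :=
  foldr (fun j acc => if cadj i j then (nth 0 g i - nth 0 g j) + acc else acc) 0 (iota 0 10).

Lemma cclapE g i : cclap g i = \sum_(j <- iota 0 10 | cadj i j) (nth 0 g i - nth 0 g j).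
Proof.
rewrite /cclap; elim: (iota 0 10) => [|a s IH]; rewrite ?big_nil ?big_cons //= IH; by case: cadj.
Qed.

Lemma lap_p (G : T4 -> int) g i : (i < 10)%N -> (forall j, (j < 10)%N -> G (p j) = nth 0 g j) ->
  lap RT4_adj G (p i) = cclap g i.
Proof.
move=> hi HG; rewrite /lap sumT4 cclapE big_seq_cond [RHS]big_seq_cond.
apply: eq_big => [j|j /andP [hj _]].
  rewrite mem_iota; case hj: (0 <= j < 0 + 10)%N => //=.
  by rewrite adj_p //; move: hj; rewrite add0n => /andP [_ ->].
by move: hj; rewrite mem_iota => hj; rewrite !HG.
Qed.

Definition Ecomp (l : seq nat) (g : seq int) : seq int :=
  [seq (nth 0%N l i)%:Z - cclap g i | i <- iota 0 10].
Definition burn_cond (E : seq int) (o : seq nat) : bool :=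
  all (fun k => nth 0 E (nth 0%N o k) < (count (cadj (nth 0%N o k)) (take k o))%:Z) (iota 1 9).
Definition check (l : seq nat) (v : nat) (g : seq int) (o : seq nat) : bool :=
  [&& nth 0 (Ecomp l g) v <= 0, perm_eq o (iota 0 10), nth 0%N o 0 == v & burn_cond (Ecomp l g) o].
Fixpoint burnf (n : nat) (E : seq int) (o : seq nat) : seq nat :=
  match n with 0%N => o | n.+1 =>
   match [seq u <- iota 0 10 | (u \notin o) && (nth 0 E u < (count (cadj u) o)%:Z)] with
   | [::] => o | u :: _ => burnf n E (rcons o u) end end.
Fixpoint red (n : nat) (l : seq nat) (v : nat) (g : seq int) : seq int * seq nat :=
  let o := burnf 10 (Ecomp l g) [:: v] in
  if size o == 10%N then (g, o) else
  match n with 0%N => (g, o) | n.+1 =>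
    red n l v [seq nth 0 g i + (i \notin o)%:Z | i <- iota 0 10] end.
Definition cert l v := red 60 l v (nseq 10 0).
Fixpoint enumvec (n k : nat) : seq (seq nat) :=
  match n with 0%N => [:: [::]] | n.+1 =>
    flatten [seq [seq a :: t | t <- enumvec n (k - a)] | a <- iota 0 k.+1] end.
Fixpoint tryv (l : seq nat) (vs : seq nat) : bool :=
  match vs with [::] => false | v :: vs' =>
    if (let '(g,o) := cert l v in check l v g o) then true else tryv l vs' end.
Definition okl l := tryv l (iota 0 10).

Lemma all_ok : all okl (enumvec 10 5).
Proof. vm_compute. reflexivity. Qed.

Lemma tryv_sound l vs : tryv l vs -> exists v g o, v \in vs /\ check l v g o.
Proof.
elim: vs => [|v vs IH] //=.
case E: (cert l v) => [g o]; case: ifP => [h _|_ /IH [v' [g' [o' [h1 h2]]]]].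
  by exists v, g, o; rewrite inE eqxx.
by exists v', g', o'; rewrite inE h1 orbT.
Qed.

Lemma okl_sound l : okl l -> exists v g o, v \in iota 0 10 /\ check l v g o.
Proof. rewrite /okl; exact: tryv_sound. Qed.

Lemma enumvec_complete n k t : size t = n -> (sumn t <= k)%N -> t \in enumvec n k.
Proof.
elim: n k t => [|n IH] k t.
  by case: t => //= _ _; rewrite inE.
case: t => [|a t] //= [st] hs.
change (a :: t \in flatten [seq [seq a0 :: t0 | t0 <- enumvec n (k - a0)] | a0 <- iota 0 k.+1]); apply/flatten_mapP; exists a.
  by rewrite mem_iota; lia.
by apply/mapP; exists t => //; apply: IH => //; lia.
Qed.

Lemma sumnZ (s : seq nat) (F : nat -> nat) :
  (sumn [seq F i | i <- s])%:Z = \sum_(i <- s) (F i)%:Z.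
Proof. elim: s => [|a s IH]; rewrite ?big_nil ?big_cons //= -IH; lia. Qed.

Lemma lower D0 : pos_rank RT4_adj D0 -> 6 <= div_deg D0.
Proof.
move=> HD0; rewrite leNgt; apply/negP => hlt.
have [D1 [e01 [eff1 _]]] := HD0 u0.
have [f1 Hf1] := equiv_lap RT4_sym RT4_irr e01.
have deg1 : div_deg D1 = div_deg D0.
  by rewrite /div_deg (eq_bigr _ (fun u _ => Hf1 u)) sumrB (sum_lap RT4_sym) subr0.
move/forallP: eff1 => eff1.
set l := [seq `|D1 (p i)|%N | i <- iota 0 10].
have hl : forall i, (i < 10)%N -> D1 (p i) = (nth 0%N l i)%:Z.
  move=> i hi; rewrite (nth_map 0%N) ?size_iota // nth_iota // add0n.
  by rewrite abszE ger0_norm.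
have hsum : (sumn l <= 5)%N.
  have : (sumn l)%:Z = div_deg D1.
    rewrite sumnZ /div_deg sumT4' !big_seq; apply: eq_bigr => i.
    by rewrite mem_iota => /andP [_ hi]; rewrite abszE ger0_norm.
  rewrite deg1; lia.
have lin : l \in enumvec 10 5 by apply: enumvec_complete => //; rewrite size_map size_iota.
have [v [g [o [vin]]]] := okl_sound (allP all_ok l lin).
case/and4P => Ev po o0 bc.
move: vin; rewrite mem_iota add0n => /andP [_ hv].
set G := fun u => nth 0 g (q u).
set E := fun u => D1 u - lap RT4_adj G u.
have hE : forall i, (i < 10)%N -> E (p i) = nth 0 (Ecomp l g) i.
  move=> i hi; rewrite /E /Ecomp (nth_map 0%N) ?size_iota // nth_iota // add0n hl // (lap_p (g := g)) //.
  by move=> j hj; rewrite /G qp.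
have so : size o = 10%N by rewrite (perm_size po) size_iota.
have olt : forall j, j \in o -> (j < 10)%N by move=> j; rewrite (perm_mem po) mem_iota.
have [D' [e0' [eff' pos']]] := HD0 (p v).
have [f' Hf'] := equiv_lap RT4_sym RT4_irr e0'.
move/forallP: eff' => eff'.
have key' := @key _ RT4_adj E (fun u => f' u - f1 u - G u) (p v) (map p o).
have Eq : forall u, E u - lap RT4_adj (fun u => f' u - f1 u - G u) u = D' u.
  move=> u; rewrite /E !lapB Hf' Hf1; lia.
apply: key'.
- by rewrite hE.
- rewrite map_inj_in_uniq; first by rewrite (perm_uniq po) iota_uniq.
  by move=> x y hx hy /eqP; rewrite p_inj ?olt // => /eqP.
- by move=> x; rewrite -(pq x); apply: map_f; rewrite (perm_mem po) mem_iota q_lt.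
- by rewrite (nth_map 0%N) ?so // (eqP o0).
- move=> k; rewrite size_map so => /andP [k0 k10].
  rewrite (nth_map 0%N) ?so // hE; last by apply: olt; rewrite mem_nth ?so.
  rewrite -map_take count_map.
  have := allP bc k; rewrite mem_iota k0 /= => /(_ k10) h.
  suff -> : count (preim p (RT4_adj (p (nth 0%N o k)))) (take k o) = count (cadj (nth 0%N o k)) (take k o) by [].
  apply: eq_in_count => j /mem_take hj /=.
  by rewrite adj_p // olt // mem_nth ?so.
- by split => [u|]; rewrite Eq.
Qed.

Definition dl : seq nat := [:: 3; 2; 1; 0; 0; 0; 0; 0; 0; 0]%N.
Definition D6 : divisor T4 := [ffun u => (nth 0%N dl (q u))%:Z].
Definition fires (D : divisor T4) (s : seq nat) : divisor T4 :=
  foldl (fun D j => fire RT4_adj (p j) D) D s.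

Lemma fires_equiv D s : div_equiv RT4_adj D (fires D s).
Proof.
elim: s D => [|j s IH] D /=; first exact: rt_refl.
eapply rt_trans; [apply: rt_step; exists (p j); reflexivity | exact: IH].
Qed.

Lemma fires_val D s u :
  fires D s u = D u - lap RT4_adj (fun w => (count (fun j => p j == w) s)%:Z) u.
Proof.
elim: s D => [|j s IH] D /=; first by rewrite (lap_ext _ (g := fun _ => 0)) // lap0 subr0.
rewrite IH (fireE RT4_sym RT4_irr).
rewrite [in RHS](lap_ext _ (g := fun w => (w == p j)%:Z + (count (fun j => p j == w) s)%:Z)).
  by rewrite lapD opprD addrA.
by move=> w; rewrite PoszD eq_sym.
Qed.

Definition gl (s : seq nat) : seq int := [seq (count_mem j s)%:Z | j <- iota 0 10].

Lemma upper_val s i : all (fun j => j < 10)%N s -> (i < 10)%N ->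
  fires D6 s (p i) = (nth 0%N dl i)%:Z - cclap (gl s) i.
Proof.
move=> hs hi; rewrite fires_val ffunE qp // (lap_p (g := gl s)) // => j hj.
rewrite (nth_map 0%N) ?size_iota // nth_iota // add0n; congr Posz.
apply: eq_in_count => k hk /=; rewrite p_inj //.
exact: (allP hs).
Qed.

Definition upcheck (s : seq nat) (t : nat) : bool :=
  [&& all (fun j => j < 10)%N s,
      all (fun i => 0 <= (nth 0%N dl i)%:Z - cclap (gl s) i) (iota 0 10) &
      0 < (nth 0%N dl t)%:Z - cclap (gl s) t].

Definition sl : seq (seq nat) :=
  [:: [:: ]; [:: ]; [:: ]; [:: 0; 1; 2; 4; 5; 6; 7; 8; 9]; [:: 0; 1; 2; 3]; [:: 0; 1; 2; 3];
      [:: 0; 1; 2; 3]; [:: 0; 1; 2; 3]; [:: 0; 1; 2; 3]; [:: 0; 1; 2; 3]]%N.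

Lemma up_ok : all (fun t => upcheck (nth [::] sl t) t) (iota 0 10).
Proof. vm_compute. reflexivity. Qed.

Lemma upper : pos_rank RT4_adj D6.
Proof.
move=> v; set t := q v.
have := allP up_ok t; rewrite mem_iota q_lt => /(_ isT) /and3P [hs heff hpos].
exists (fires D6 (nth [::] sl t)); split; first exact: fires_equiv.
split.
  apply/forallP => u; rewrite -(pq u) upper_val ?q_lt //.
  by apply: (allP heff); rewrite mem_iota q_lt.
by rewrite -(pq v) upper_val ?q_lt.
Qed.

Lemma deg6 : div_deg D6 = 6%:Z.
Proof.
rewrite /div_deg sumT4' big_seq.
rewrite (eq_bigr (fun j => (nth 0%N dl j)%:Z)) => [|j]; last first.
  by rewrite mem_iota => /andP [_ hj]; rewrite ffunE qp.
by rewrite -big_seq /= !big_cons big_nil.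
Qed.

Theorem theorem4p4 : is_gonality RT4_adj 6%:Z.
Proof.
split; first by exists D6; split; [exact: upper | exact: deg6].
exact: lower.
Qed.
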